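(* Let $y_0\in\mathbb{R}$, $b>0$, $\epsilon>0$, and let $f:[y_0,\infty)\to\mathbb{R}$ be such that $p:=1/f$ is well defined and twice differentiable on $[y_0,\infty)$, with $f(y_0)>0$, $f'(y)>0$ and $p''(y)>0$ for all $y\ge y_0$. Assume $b<\int_{y_0}^{\infty}p(y)\,dy$ (possibly $+\infty$). For $h>0$ and integers $N\ge0$ define $$\Sigma_{l,h,N}=\sum_{i=1}^{N}h\,p(y_0+hi),\qquad \Sigma_{t,h,N}=\sum_{i=1}^{N}\frac h2\big(p(y_0+hi)+p(y_0+h(i-1))\big),$$ and set $\Sigma_{t,h,N}=0$ for integers $N<0$. For each positive integer $j$ let $h^{(j)}=\epsilon/j$ and let $n_2^{(j)}$ be the smallest positive integer $N$ with $\Sigma_{l,h^{(j)},N}\ge b$; assume $n_2^{(1)}$ exists. Consider Algorithm 1: for $j=1,2,3,\dots$, compute $n_2^{(j)}$ and stop as soon as $\Sigma_{t,h^{(j)},\,n_2^{(j)}-j}\le b$. Then Algorithm 1 stops after finitely many iterations, i.e. there exists a positive integer $j$ with $\Sigma_{t,h^{(j)},\,n_2^{(j)}-j}\le b$.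
   Context: $\Sigma_{l,h,N}$ and $\Sigma_{t,h,N}$ are the lower rectangular and trapezoidal sums with step $h$ for $\int_{y_0}^{y_0+hN}p(y)\,dy$ (empty sums are $0$). When Algorithm 1 stops at iteration $j$, it outputs an approximation such as $y_0+h^{(j)}n_2^{(j)}$ to the number $Y$ defined by $\int_{y_0}^{Y}p(y)\,dy=b$ (the value at $x=b$ of the solution of $y'=f(y)$, $y(0)=y_0$). *)

(* Defs.v *)
From Stdlib Require Import Reals Lra ZArith.
From Coquelicot Require Import Coquelicot.
Open Scope R_scope.

Definition is_derive_on_from (a : R) (g : R -> R) (x l : R) : Prop :=
  filterlim (fun t => (g t - g x) / (t - x))
    (within (fun t => a <= t /\ t <> x) (locally x)) (locally l).

Fixpoint Sigma_l (p : R -> R) (y0 h : R) (N : nat) : R :=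
  match N with
  | O => 0
  | S n => Sigma_l p y0 h n + h * p (y0 + h * INR (S n))
  end.

Fixpoint Sigma_t_nat (p : R -> R) (y0 h : R) (N : nat) : R :=
  match N with
  | O => 0
  | S n => Sigma_t_nat p y0 h n
           + h / 2 * (p (y0 + h * INR (S n)) + p (y0 + h * INR n))
  end.

Definition Sigma_t (p : R -> R) (y0 h : R) (N : Z) : R :=
  if (N <? 0)%Z then 0 else Sigma_t_nat p y0 h (Z.to_nat N).

Definition is_n2 (p : R -> R) (y0 b h : R) (n : nat) : Prop :=
  (1 <= n)%nat /\ b <= Sigma_l p y0 h n /\
  (forall M : nat, (1 <= M)%nat -> (M < n)%nat -> Sigma_l p y0 h M < b).

(* Main.v *)
Require Import Defs.
From Stdlib Require Import Reals ZArith Lra Lia Classical Arith.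
From Coquelicot Require Import Coquelicot.
Open Scope R_scope.

Lemma quot_close a g x l e : is_derive_on_from a g x l -> 0 < e ->
  exists d, 0 < d /\ forall t, a <= t -> t <> x -> Rabs (t - x) < d ->
    Rabs ((g t - g x) / (t - x) - l) < e.
Proof.
  intros H He.
  assert (Hl : locally l (fun y => Rabs (y - l) < e)).
  { exists (mkposreal e He); intros y Hy. exact Hy. }
  specialize (H _ Hl).
  destruct H as [d Hd].
  exists d; split; [apply cond_pos|].
  intros t Ht Htx Hd'. apply (Hd t); [exact Hd' | split; auto].
Qed.

Lemma lip a g x l : is_derive_on_from a g x l ->
  exists d K, 0 < d /\ forall t, a <= t -> Rabs (t - x) < d ->
    Rabs (g t - g x) <= K * Rabs (t - x).
Proof.
  intros H. destruct (quot_close a g x l 1 H Rlt_0_1) as [d [Hd H1]].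
  exists d, (Rabs l + 1). split; auto. intros t Ht Htd.
  destruct (Req_dec t x) as [->|Hne].
  - replace (g x - g x) with 0 by ring. rewrite Rabs_R0.
    assert (0 <= Rabs (x - x)) by apply Rabs_pos. pose proof (Rabs_pos l). nra.
  - specialize (H1 t Ht Hne Htd).
    assert (Hq : Rabs ((g t - g x) / (t - x)) <= Rabs l + 1).
    { pose proof (Rabs_triang_inv ((g t - g x) / (t - x)) l). lra. }
    replace (g t - g x) with ((g t - g x) / (t - x) * (t - x)) by (field; lra).
    rewrite Rabs_mult. apply Rmult_le_compat_r; [apply Rabs_pos| exact Hq].
Qed.

Lemma to_derive a g x l : is_derive_on_from a g x l -> a < x -> is_derive g x l.
Proof.
  intros H Hax. apply is_derive_Reals. intros e He.
  destruct (quot_close a g x l e H He) as [d [Hd H1]].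
  assert (Hm : 0 < Rmin d (x - a)) by (apply Rmin_pos; lra).
  exists (mkposreal _ Hm). intros h Hh Hhd. simpl in Hhd.
  pose proof (Rmin_l d (x-a)). pose proof (Rmin_r d (x-a)).
  specialize (H1 (x + h)).
  replace (x + h - x) with h in H1 by ring. apply H1; try lra.
  apply Rabs_lt_between in Hhd. lra.
Qed.

Lemma f_incr y0 f f' :
  (forall y, y0 <= y -> is_derive_on_from y0 f y (f' y)) ->
  (forall y, y0 <= y -> 0 < f' y) ->
  forall a c, y0 <= a -> a < c -> f a < f c.
Proof.
  intros Hd Hp.
  assert (Hint : forall a c, y0 < a -> a < c -> f a < f c).
  { intros a c Ha Hac.
    destruct (MVT_gen f a c f') as [xi [Hxi Heq]].
    - intros x Hx. rewrite Rmin_left in Hx by lra. rewrite Rmax_right in Hx by lra.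
      apply (to_derive y0); [apply Hd; lra | lra].
    - intros x Hx. rewrite Rmin_left in Hx by lra. rewrite Rmax_right in Hx by lra.
      apply derivable_continuous_pt. exists (f' x).
      apply is_derive_Reals. apply (to_derive y0); [apply Hd; lra | lra].
    - rewrite Rmin_left in Hxi by lra. rewrite Rmax_right in Hxi by lra.
      assert (0 < f' xi) by (apply Hp; lra). nra. }
  intros a c Ha Hac. destruct (Req_dec a y0) as [->|Hne]; [|apply Hint; lra].
  assert (Hf0 := Hp y0 (Rle_refl _)).
  destruct (quot_close y0 f y0 (f' y0) (f' y0) (Hd y0 (Rle_refl _)) Hf0) as [d [Hdp H1]].
  set (t := y0 + Rmin d (c - y0) / 2).
  assert (Hm : 0 < Rmin d (c - y0)) by (apply Rmin_pos; lra).
  pose proof (Rmin_l d (c-y0)). pose proof (Rmin_r d (c-y0)).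
  assert (Ht : f y0 < f t).
  { specialize (H1 t). assert (Hq : 0 < (f t - f y0) / (t - y0)).
    { assert (Hr : Rabs (t - y0) < d) by (unfold t; rewrite Rabs_right; lra).
      specialize (H1 ltac:(unfold t; lra) ltac:(unfold t; lra) Hr).
      apply Rabs_lt_between in H1. lra. }
    assert (0 < t - y0) by (unfold t; lra).
    assert (Hp2 : 0 < (f t - f y0) / (t - y0) * (t - y0)) by (apply Rmult_lt_0_compat; lra).
    replace ((f t - f y0) / (t - y0) * (t - y0)) with (f t - f y0) in Hp2 by (field; lra).
    lra. }
  assert (f t < f c) by (apply Hint; unfold t; lra). lra.
Qed.

Lemma int_P y0 P p' :
  (forall y, y0 <= y -> is_derive_on_from y0 P y (p' y)) ->
  forall a c, y0 <= a -> a <= c -> ex_RInt P a c.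
Proof.
  intros Hd a c Ha Hac.
  set (q := fun t => P (Rmax t y0)).
  assert (Hc : forall z, y0 <= z -> continuous q z).
  { intros z Hz. apply continuity_pt_filterlim.
    destruct (lip y0 P z (p' z) (Hd z Hz)) as [d [K [Hdp HK]]].
    assert (HK' : forall t, Rabs (t - z) < d -> Rabs (q t - q z) <= Rabs K * Rabs (t - z)).
    { intros t Ht. unfold q. rewrite (Rmax_left z y0) by lra.
      assert (Hm : Rabs (Rmax t y0 - z) <= Rabs (t - z)).
      { unfold Rmax; destruct (Rle_dec t y0).
        - rewrite (Rabs_left1 (y0 - z)) by lra. rewrite Rabs_left1 by lra. lra.
        - lra. }
      eapply Rle_trans. apply HK. apply Rmax_r. lra.
      eapply Rle_trans. apply Rmult_le_compat_r. apply Rabs_pos. apply RRle_abs.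
      apply Rmult_le_compat_l. apply Rabs_pos. exact Hm. }
    unfold continuity_pt, continue_in, limit1_in, limit_in. simpl. unfold R_dist.
    intros e He. exists (Rmin d (e / (Rabs K + 1))). split.
    { apply Rmin_pos; auto. apply Rdiv_lt_0_compat; auto. pose proof (Rabs_pos K); lra. }
    intros t [_ Ht]. pose proof (Rmin_l d (e / (Rabs K + 1))).
    pose proof (Rmin_r d (e / (Rabs K + 1))).
    specialize (HK' t ltac:(lra)). pose proof (Rabs_pos K). pose proof (Rabs_pos (t - z)).
    assert (Hx : (Rabs K + 1) * (e / (Rabs K + 1)) = e) by (field; lra).
    nra. }
  apply (ex_RInt_ext q).
  - intros x Hx. rewrite Rmin_left in Hx by lra. rewrite Rmax_right in Hx by lra.
    unfold q. rewrite Rmax_left by lra. reflexivity.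
  - apply (@ex_RInt_continuous R_CompleteNormedModule). intros z Hz. rewrite Rmin_left in Hz by lra.
    apply Hc. lra.
Qed.

Section S.
Variables (P : R -> R) (y0 h : R).
Hypothesis hh : 0 < h.
Hypothesis Pdec : forall a c, y0 <= a -> a <= c -> P c <= P a.
Hypothesis Pint : forall a c, y0 <= a -> a <= c -> ex_RInt P a c.

Lemma pt_ge N : y0 <= y0 + h * INR N.
Proof. pose proof (pos_INR N). nra. Qed.

Lemma RInt_up a c : y0 <= a -> a <= c -> RInt P a c <= (c - a) * P a.
Proof.
  intros Ha Hac.
  eapply Rle_trans. apply (RInt_le P (fun _ => P a)); auto.
  apply ex_RInt_const. intros x Hx. apply Pdec; lra.
  rewrite RInt_const. apply Rle_refl.
Qed.

Lemma L N : RInt P y0 (y0 + h * INR N) <=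
  Sigma_l P y0 h N + h * P y0 - h * P (y0 + h * INR N).
Proof.
  induction N.
  - simpl. replace (y0 + h * 0) with y0 by ring. rewrite RInt_point.
    change (@zero R_CompleteNormedModule) with 0. lra.
  - rewrite <- (RInt_Chasles P y0 (y0 + h * INR N)).
    2: apply Pint; [lra| apply pt_ge].
    2: apply Pint; [apply pt_ge| rewrite S_INR; lra].
    change plus with Rplus.
    pose proof (RInt_up (y0 + h * INR N) (y0 + h * INR (S N)) (pt_ge N)
      ltac:(rewrite S_INR; lra)).
    replace (y0 + h * INR (S N) - (y0 + h * INR N)) with h in H by (rewrite S_INR; ring).
    cbn [Sigma_l]. lra.
Qed.

Lemma St m : Sigma_t_nat P y0 h m = Sigma_l P y0 h m + h / 2 * (P y0 - P (y0 + h * INR m)).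
Proof.
  induction m.
  - simpl. replace (y0 + h * 0) with y0 by ring. ring.
  - cbn [Sigma_t_nat Sigma_l]. rewrite IHm. field.
Qed.

Lemma Slk m k : Sigma_l P y0 h m + INR k * h * P (y0 + h * INR (m + k)) <= Sigma_l P y0 h (m + k).
Proof.
  induction k.
  - rewrite Nat.add_0_r. simpl. lra.
  - rewrite <- plus_n_Sm. cbn [Sigma_l].
    assert (Hd : P (y0 + h * INR (S (m + k))) <= P (y0 + h * INR (m + k))).
    { apply Pdec. apply pt_ge. rewrite S_INR. lra. }
    assert (0 <= INR k * h) by (pose proof (pos_INR k); nra).
    rewrite S_INR. nra.
Qed.
End S.

Lemma least P y0 b h : 0 < b -> forall N, b <= Sigma_l P y0 h N -> exists n, is_n2 P y0 b h n.
Proof.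
  intros hb N. induction N as [N IH] using (well_founded_ind Wf_nat.lt_wf).
  intros HN.
  destruct (classic (exists M, (1 <= M)%nat /\ (M < N)%nat /\ b <= Sigma_l P y0 h M)) as [[M [H1 [H2 H3]]]|Hno].
  - exact (IH M H2 H3).
  - exists N. split; [|split; auto].
    + destruct N; [simpl in HN; lra| lia].
    + intros M H1 H2. apply Rnot_le_lt. intros H3. apply Hno. exists M; auto.
Qed.

Lemma arch (A : R) : exists j : nat, A < INR j.
Proof.
  destruct (archimed (Rabs A)) as [H1 _].
  exists (Z.to_nat (up (Rabs A))).
  assert (0 < IZR (up (Rabs A))) by (pose proof (Rabs_pos A); lra).
  apply lt_0_IZR in H.
  rewrite INR_IZR_INZ, Z2Nat.id by lia.
  pose proof (RRle_abs A). lra.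
Qed.

Theorem theorem1
  (y0 b eps : R) (f : R -> R)
  (hb : 0 < b) (heps : 0 < eps)
  (hf_nz : forall y, y0 <= y -> f y <> 0)
  (hf0 : 0 < f y0)
  (f' : R -> R)
  (hf'_der : forall y, y0 <= y -> is_derive_on_from y0 f y (f' y))
  (hf'_pos : forall y, y0 <= y -> 0 < f' y)
  (p' p'' : R -> R)
  (hp'_der : forall y, y0 <= y -> is_derive_on_from y0 (fun t => / f t) y (p' y))
  (hp''_der : forall y, y0 <= y -> is_derive_on_from y0 p' y (p'' y))
  (hp''_pos : forall y, y0 <= y -> 0 < p'' y)
  (hint : exists l : Rbar,
      is_lim (fun Y => RInt (fun t => / f t) y0 Y) p_infty l /\ Rbar_lt (Finite b) l)
  (hn21 : exists n : nat, is_n2 (fun t => / f t) y0 b (eps / INR 1) n) :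
  exists (j n : nat),
    (1 <= j)%nat /\ is_n2 (fun t => / f t) y0 b (eps / INR j) n /\
    Sigma_t (fun t => / f t) y0 (eps / INR j) (Z.of_nat n - Z.of_nat j)%Z <= b.
Proof.
  set (P := fun t => / f t).
  assert (Hfpos : forall y, y0 <= y -> 0 < f y).
  { intros y Hy. destruct (Req_dec y y0) as [->|Hne]; auto.
    pose proof (f_incr y0 f f' hf'_der hf'_pos y0 y (Rle_refl _) ltac:(lra)). lra. }
  assert (Pdec : forall a c, y0 <= a -> a <= c -> P c <= P a).
  { intros a c Ha Hac. unfold P. destruct (Req_dec a c) as [->|Hne]; [lra|].
    pose proof (f_incr y0 f f' hf'_der hf'_pos a c Ha ltac:(lra)).
    apply Rinv_le_contravar; [apply Hfpos; lra| lra]. }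
  assert (Ppos : forall y, y0 <= y -> 0 < P y).
  { intros y Hy. unfold P. apply Rinv_0_lt_compat, Hfpos, Hy. }
  assert (HPint : forall a c : R, y0 <= a -> a <= c -> ex_RInt P a c)
    by exact (int_P y0 P p' hp'_der).
  destruct hint as [l [Hlim Hlt]].
  assert (Hev : Rbar_locally' p_infty (fun Y : R => (b < RInt P y0 Y)%R)).
  { apply Hlim. destruct l as [r| |]; simpl in Hlt; try contradiction.
    - assert (Hp : 0 < r - b) by lra. exists (mkposreal _ Hp). intros y Hy.
      change (Rabs (y - r) < r - b) in Hy. apply Rabs_lt_between' in Hy. lra.
    - exists b. intros x Hx. exact Hx. }
  destruct Hev as [M HM].
  set (X := Rmax M y0 + 1).
  assert (HX : y0 < X) by (unfold X; pose proof (Rmax_r M y0); lra).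
  assert (HbX : b < RInt P y0 X) by (apply HM; unfold X; pose proof (Rmax_l M y0); lra).
  set (c0 := RInt P y0 X - b).
  assert (Hc0 : 0 < c0) by (unfold c0; lra).
  assert (HPX := Ppos X ltac:(lra)).
  assert (HP0 := Ppos y0 ltac:(lra)).
  destruct (arch (eps * P y0 / c0 + P y0 / (2 * P X) + 1)) as [j Hj].
  assert (HA1 : 0 < eps * P y0 / c0) by (apply Rdiv_lt_0_compat; nra).
  assert (HA2 : 0 < P y0 / (2 * P X)) by (apply Rdiv_lt_0_compat; nra).
  assert (Hj1 : (1 <= j)%nat).
  { assert (INR 1 < INR j) by (simpl; lra). apply INR_lt in H. lia. }
  assert (HjR : 1 <= INR j) by (apply (le_INR 1) in Hj1; simpl in Hj1; lra).
  set (h := eps / INR j).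
  assert (Hh : 0 < h) by (unfold h; apply Rdiv_lt_0_compat; lra).
  assert (Hhj : h * INR j = eps) by (unfold h; field; lra).
  assert (HhP : h * P y0 < c0).
  { assert (E1 : eps * P y0 = (eps * P y0 / c0) * c0) by (field; lra).
    assert (eps * P y0 < INR j * c0) by nra.
    apply (Rmult_lt_reg_r (INR j)); [lra|]. nra. }
  assert (HjP : P y0 / 2 <= (INR j - 1) * P X).
  { assert (E1 : P y0 / 2 = (P y0 / (2 * P X)) * P X) by (field; lra). nra. }
  destruct (arch ((X - y0) / h)) as [N HN].
  assert (HNX : X < y0 + h * INR N).
  { assert (E : X - y0 = (X - y0) / h * h) by (field; lra). nra. }
  assert (Hge : forall Y, X <= Y -> RInt P y0 X <= RInt P y0 Y).
  { intros Y HY. rewrite <- (RInt_Chasles P y0 X Y) by (apply HPint; lra).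
    change plus with Rplus.
    assert (0 <= RInt P X Y); [|lra].
    apply RInt_ge_0; auto. apply HPint; lra. intros x Hx. apply Rlt_le, Ppos. lra. }
  assert (HL : forall N, RInt P y0 (y0 + h * INR N) <= Sigma_l P y0 h N + h * P y0).
  { intros K. pose proof (L P y0 h Hh Pdec HPint K).
    pose proof (Ppos (y0 + h * INR K) (pt_ge y0 h Hh K)). nra. }
  assert (HbN : b <= Sigma_l P y0 h N).
  { pose proof (HL N). pose proof (Hge _ (Rlt_le _ _ HNX)). unfold c0 in HhP. lra. }
  destruct (least P y0 b h hb N HbN) as [n Hn].
  exists j, n. split; [exact Hj1|]. split; [exact Hn|].
  destruct Hn as [Hn1 [Hnb Hmin]].
  destruct n as [|n']; [lia|].
  assert (Hlt' : Sigma_l P y0 h n' < b).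
  { destruct n' as [|n'']. simpl. lra. apply Hmin; lia. }
  assert (Hx : y0 + h * INR n' < X).
  { apply Rnot_le_lt. intros Hc. pose proof (HL n'). pose proof (Hge _ Hc).
    unfold c0 in HhP. lra. }
  fold P. fold h.
  unfold Sigma_t.
  destruct (Z.of_nat (S n') - Z.of_nat j <? 0)%Z eqn:E; [lra|].
  apply Z.ltb_ge in E.
  assert (Hjn : (j <= S n')%nat) by lia.
  rewrite <- Nat2Z.inj_sub by exact Hjn. rewrite Nat2Z.id.
  set (m := (S n' - j)%nat).
  rewrite (St P y0 h).
  pose proof (Slk P y0 h Hh Pdec m (j - 1)) as Hs.
  assert (Em : (m + (j - 1) = n')%nat) by (unfold m; lia).
  rewrite Em in Hs. rewrite minus_INR in Hs by exact Hj1. simpl INR in Hs.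
  assert (HPn : P X <= P (y0 + h * INR n')) by (apply Pdec; [apply pt_ge; lra| lra]).
  assert (HPm := Ppos (y0 + h * INR m) (pt_ge y0 h Hh m)).
  assert (Hk : P y0 / 2 <= (INR j - 1) * P (y0 + h * INR n')) by nra.
  assert (0 <= h * ((INR j - 1) * P (y0 + h * INR n') - P y0 / 2)) by nra.
  nra.
Qed.
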